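(* The relation $\{(\rho,\pi):\rho=[n]\text{ and }\pi=[n]!\text{ for some }n\ge1\}$ is $\Pi_2$-definable in $\mathbf Y^*=\langle\mathcal P,\le,[1]+[1]\rangle$.
   Context: $\mathcal P$ is the set of all integer partitions, including the empty partition; a partition is a nonincreasing finite sequence of positive integers (its parts). $[n]$ denotes the partition with a single part $n$. For $n\ge1$, the factorial partition $[n]!$ is the partition $(n,n-1,\dots,2,1)$ with parts $1,2,\dots,n$ each appearing exactly once. Young's lattice $\mathbf Y=\langle\mathcal P,\le\rangle$ has $(s_1,\dots,s_r)\le(n_1,\dots,n_t)$ iff $r\le t$ and $s_i\le n_i$ for all $i\le r$; $\mathbf Y^*$ is $\mathbf Y$ with a constant symbol for the partition $(1,1)$. A relation is $\Pi_n$-definable if it is defined by a first-order formula in the language $\{\le,(1,1)\}$ in prenex form with $n$ alternating quantifier blocks, the outermost universal, and a quantifier-free matrix. *)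

(* Defs.v *)
From mathcomp Require Import all_boot.
Set Implicit Arguments. Unset Strict Implicit. Unset Printing Implicit Defensive.

Definition is_part (s : seq nat) : bool :=
  sorted (fun a b => b <= a) s && all (fun x => 0 < x) s.

Definition partition := {s : seq nat | is_part s}.

Definition yle (p q : partition) : bool :=
  (size (sval p) <= size (sval q)) &&
  all (fun i => nth 0 (sval p) i <= nth 0 (sval q) i) (iota 0 (size (sval p))).

(* The constant (1,1) = [1]+[1]. *)
Definition p11 : partition := exist _ [:: 1; 1] (erefl true).

Inductive term : Type := TVar of nat | TC11.

Inductive formula : Type :=
| FLe of term & term
| FEq of term & term
| FTrue
| FFalse
| FNot of formula
| FAnd of formula & formula
| FOr of formula & formula
| FImp of formula & formula
| FAll of nat & formula
| FEx of nat & formula.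

Definition env := nat -> partition.

Definition upd (e : env) (x : nat) (a : partition) : env :=
  fun y => if y == x then a else e y.

Definition teval (e : env) (t : term) : partition :=
  match t with TVar x => e x | TC11 => p11 end.

Fixpoint sat (e : env) (f : formula) : Prop :=
  match f with
  | FLe t u => is_true (yle (teval e t) (teval e u))
  | FEq t u => teval e t = teval e u
  | FTrue => True
  | FFalse => False
  | FNot g => ~ sat e g
  | FAnd g h => sat e g /\ sat e h
  | FOr g h => sat e g \/ sat e h
  | FImp g h => sat e g -> sat e h
  | FAll x g => forall a : partition, sat (upd e x a) g
  | FEx x g => exists a : partition, sat (upd e x a) g
  end.

Fixpoint qf (f : formula) : bool :=
  match f with
  | FLe _ _ | FEq _ _ | FTrue | FFalse => true
  | FNot g => qf g
  | FAnd g h | FOr g h | FImp g h => qf g && qf h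
  | FAll _ _ | FEx _ _ => false
  end.

(* Prenex hierarchy: Pi n / Sigma n = n alternating quantifier blocks
   (outermost universal / existential), quantifier-free matrix.
   Blocks may be empty (so Sigma_n, Pi_n are included in Pi_{n+1}). *)
Inductive Pi : nat -> formula -> Prop :=
| Pi0 f : qf f -> Pi 0 f
| PiS_base n f : Sigma n f -> Pi n.+1 f
| PiS_all n x f : Pi n.+1 f -> Pi n.+1 (FAll x f)
with Sigma : nat -> formula -> Prop :=
| Sigma0 f : qf f -> Sigma 0 f
| SigmaS_base n f : Pi n f -> Sigma n.+1 f
| SigmaS_ex n x f : Sigma n.+1 f -> Sigma n.+1 (FEx x f).

Definition Pi_definable2 (n : nat) (R : partition -> partition -> Prop) : Prop :=
  exists phi : formula, Pi n phi /\
    forall e : env, R (e 0) (e 1) <-> sat e phi.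

(* [n] and [n]! = (n, n-1, ..., 1). *)
Definition single_fact_rel (rho pi : partition) : Prop :=
  exists n : nat, 1 <= n /\ sval rho = [:: n] /\ sval pi = rev (iota 1 n).

(* Main.v *)
From mathcomp Require Import all_boot zify.
Require Import Defs.
Set Implicit Arguments. Unset Strict Implicit. Unset Printing Implicit Defensive.

Definition P (p : partition) i := nth 0 (sval p) i.

Lemma part_sorted (p : partition) : sorted (fun a b => b <= a) (sval p).
Proof. by case: p => s /= /andP[]. Qed.
Lemma part_all (p : partition) : all (fun x => 0 < x) (sval p).
Proof. by case: p => s /= /andP[]. Qed.

Lemma P_pos p i : (0 < P p i) = (i < size (sval p)).
Proof.
rewrite /P; case: (ltnP i (size (sval p))) => Hi.
  by have /allP := part_all p; apply; exact: mem_nth.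
by rewrite nth_default.
Qed.

Lemma P_mono p i j : i <= j -> P p j <= P p i.
Proof.
move=> Hij; case: (ltnP j (size (sval p))) => Hj.
  have Hi : i < size (sval p) by apply: leq_ltn_trans Hj.
  have Htr : transitive (fun a b : nat => b <= a).
    by move=> x y z /= H1 H2; apply: leq_trans H2 H1.
  have Hrf : reflexive (fun a b : nat => b <= a) by move=> x /=.
  exact: (sorted_leq_nth Htr Hrf 0 (part_sorted p)).
by rewrite /P (nth_default _ Hj).
Qed.

Lemma P_S p i : P p i.+1 <= P p i.
Proof. exact: P_mono. Qed.

Lemma nth_eq_pos (s t : seq nat) : all (fun x => 0 < x) s -> all (fun x => 0 < x) t ->
  (forall i, nth 0 s i = nth 0 t i) -> s = t.
Proof.
move=> /allP Hs /allP Ht H.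
have Hsz : size s = size t.
  apply/eqP; rewrite eqn_leq; apply/andP; split; rewrite leqNgt; apply/negP => Hlt.
  - have := Hs _ (mem_nth 0 Hlt); by rewrite H nth_default.
  - have := Ht _ (mem_nth 0 Hlt); by rewrite -H nth_default.
by apply: (eq_from_nth (x0 := 0)) => // i _.
Qed.

Lemma yleP p q : yle p q <-> (forall i, P p i <= P q i).
Proof.
rewrite /yle; split.
  move=> /andP[_ /allP H] i; case: (ltnP i (size (sval p))) => Hi.
    by apply: H; rewrite mem_iota.
  by rewrite /P (nth_default _ Hi).
move=> H; apply/andP; split.
  rewrite leqNgt; apply/negP => Hlt.
  have := H (size (sval q)); rewrite {2}/P (nth_default _ (leqnn _)) leqn0.
  by rewrite eqn0Ngt P_pos Hlt.
by apply/allP => i _; apply: H.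
Qed.

Lemma peqP p q : p = q <-> (forall i, P p i = P q i).
Proof.
split; first by move=> ->.
move=> H; apply: val_inj; apply: nth_eq_pos; [exact: part_all | exact: part_all | exact: H].
Qed.

Definition mkseqp (f : nat -> nat) N := [seq x <- mkseq f N | 0 < x].

Lemma filter_pos_nth (s : seq nat) :
  (forall i, nth 0 s i.+1 <= nth 0 s i) -> forall i, nth 0 [seq x <- s | 0 < x] i = nth 0 s i.
Proof.
elim: s => [|x s IH] Hm i //=.
case: (posnP x) => [Hx|Hx].
  have Hz : forall j, nth 0 s j = 0.
    elim=> [|j IHj]; first by have := Hm 0; rewrite /= Hx; case: (nth 0 s 0).
    by have := Hm j.+1; rewrite /= IHj; case: (nth 0 s j.+1).
  have -> : [seq x <- s | 0 < x] = [::].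
    apply/eqP; rewrite -[_ == _]negbK -has_filter; apply/hasP => -[y Hy].
    move: Hy; case/(nthP 0) => j _ <-; by rewrite Hz.
  by case: i => [|i] //=; rewrite ?Hx // Hz nth_nil.
case: i => [|i] //=; apply: IH => j; exact: (Hm j.+1).
Qed.

Lemma mkseqp_part f N : (forall i, f i.+1 <= f i) -> is_part (mkseqp f N).
Proof.
move=> Hf; apply/andP; split; last by rewrite /mkseqp; apply/allP => x; rewrite mem_filter => /andP[].
apply: sorted_filter; first by move=> x y z /= H1 H2; apply: leq_trans H2 H1.
apply/(sortedP 0) => i; rewrite size_mkseq => Hi.
by rewrite !nth_mkseq //; apply: ltnW.
Qed.

Definition mkP f N (Hf : forall i, f i.+1 <= f i) : partition := exist is_part (mkseqp f N) (mkseqp_part N Hf).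

Lemma P_mkP f N Hf : f N = 0 -> forall i, P (@mkP f N Hf) i = f i.
Proof.
move=> HN i; rewrite /P /= /mkseqp filter_pos_nth.
  case: (ltnP i N) => Hi; first by rewrite nth_mkseq.
  rewrite nth_default ?size_mkseq //.
  have: f i <= f N.
    have Hd : forall d, f (N + d) <= f N.
      by elim=> [|d IH]; rewrite ?addn0 // addnS; apply: leq_trans (Hf _) IH.
    by rewrite -(subnKC Hi) Hd.
  by rewrite HN leqn0 => /eqP ->.
move=> j; case: (ltnP j.+1 N) => Hj.
  by rewrite !nth_mkseq //; apply: ltnW.
by rewrite (nth_default _ (n:=j.+1)) ?size_mkseq.
Qed.

Definition v n := TVar n.
Definition Le a b := FLe (v a) (v b).
Definition Ne a b := FNot (FEq (v a) (v b)).
Definition Mrow := FImp (FNot (FLe TC11 (v 2)))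
          (FAnd (FImp (Le 2 1) (Le 2 0)) (FImp (Le 2 0) (Le 2 1))).
Definition Mdom := FImp (FAnd (Le 3 4) (FAnd (Ne 3 4) (FAnd (Le 4 1) (Ne 4 1))))
   (FAnd (Le 3 6) (FAnd (Le 6 1) (FAnd (Ne 6 3) (FAnd (Ne 6 4) (Ne 6 1))))).
Definition Mf := FAnd (FNot (FLe TC11 (v 0))) (FAnd (FNot (Le 0 5)) (FAnd Mrow Mdom)).
Definition phi := FAll 2 (FAll 3 (FAll 4 (FEx 5 (FEx 6 Mf)))).

Lemma phi_Pi : Pi 2 phi.
Proof.
apply: PiS_all; apply: PiS_all; apply: PiS_all; apply: PiS_base.
apply: SigmaS_ex; apply: SigmaS_ex; apply: SigmaS_base; exact: Pi0.
Qed.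

Definition Mprop (r p y u m z w : partition) : Prop :=
  ~ yle p11 r /\ (~ yle r z /\ ((~ yle p11 y -> (yle y p -> yle y r) /\ (yle y r -> yle y p)) /\
  (yle u m /\ ~ u = m /\ yle m p /\ ~ m = p ->
     yle u w /\ yle w p /\ ~ w = u /\ ~ w = m /\ ~ w = p))).

Lemma satE e : sat e phi <-> forall y u m, exists z w, Mprop (e 0) (e 1) y u m z w.
Proof. exact: iff_refl. Qed.

From Stdlib Require Import Classical.

Lemma addcell X Y : (forall i, P X i <= P Y i) -> X <> Y ->
  exists i Z, P X i < P Y i /\ forall k, P Z k = P X k + (k == i).
Proof.
move=> HXY Hne.
have Hex : exists i, P X i < P Y i.
  case: (classic (exists i, P X i < P Y i)) => // Hn; exfalso; apply: Hne.
  apply/peqP => i; apply/eqP; rewrite eqn_leq HXY /= leqNgt; apply/negP => Hlt.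
  by apply: Hn; exists i.
case: (ex_minnP Hex) => i Hi Hmin.
pose f k := P X k + (k == i).
have Hf : forall k, f k.+1 <= f k.
  move=> k; rewrite /f; case: (eqVneq k.+1 i) => Hk.
    have Hki : k < i by rewrite -Hk.
    have Hk2 : P X k = P Y k.
      apply/eqP; rewrite eqn_leq HXY /= leqNgt; apply/negP => Hlt.
      by have := Hmin _ Hlt; rewrite leqNgt Hki.
    rewrite (ltn_eqF Hki) addn0 addn1 Hk2.
    apply: leq_trans (P_mono Y (leqnSn k)); by rewrite -Hk in Hi.
  by rewrite addn0; apply: leq_trans (P_S X k) (leq_addr _ _).
have HN : f (size (sval X) + i).+1 = 0.
  rewrite /f /P nth_default; last by rewrite -addnS leq_addr.
  by rewrite (gtn_eqF (m := i)) // ltnS leq_addl.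
exists i, (mkP (size (sval X) + i).+1 Hf); split => // k; by rewrite P_mkP.
Qed.

Lemma le_antisymP X Y : (forall i, P X i <= P Y i) -> (forall i, P Y i <= P X i) -> X = Y.
Proof. by move=> H1 H2; apply/peqP => i; apply/eqP; rewrite eqn_leq H1 H2. Qed.

Lemma dom_complete D (HD : forall k, 0 < P D k -> P D k.+1 + 1 = P D k) u m :
  (forall i, P u i <= P m i) -> u <> m -> (forall i, P m i <= P D i) -> m <> D ->
  exists w, (forall i, P u i <= P w i) /\ (forall i, P w i <= P D i) /\ w <> u /\ w <> m /\ w <> D.
Proof.
move=> Hum Hne HmD HneD.
have [i [Z1 [Hi1 HZ1]]] := addcell Hum Hne.
have HZ1m : forall k, P Z1 k <= P m k.
  move=> k; rewrite HZ1; case: (eqVneq k i) => [->|_]; by rewrite ?addn1 ?addn0 ?Hum.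
case: (classic (Z1 = m)) => HZm; last first.
  exists Z1; split; first by move=> k; rewrite HZ1 leq_addr.
  split; first by move=> k; apply: leq_trans (HZ1m k) (HmD k).
  split; first by move/peqP/(_ i); rewrite HZ1 eqxx addn1 => /eqP; rewrite eqn_leq ltnn.
  split => // HZD; apply: HneD; apply: le_antisymP => // k.
  by rewrite -HZD.
have Hm : forall k, P m k = P u k + (k == i) by move=> k; rewrite -HZm HZ1.
have [j [Z2 [Hj2 HZ2]]] := addcell HmD HneD.
have HZ2D : forall k, P Z2 k <= P D k.
  move=> k; rewrite HZ2; case: (eqVneq k j) => [->|_]; by rewrite ?addn1 ?addn0 ?HmD.
case: (classic (Z2 = D)) => HZD; last first.
  exists Z2; split.
    by move=> k; rewrite HZ2; apply: leq_trans (Hum k) (leq_addr _ _).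
  split => //; split.
    by move/peqP/(_ j); rewrite HZ2 eqxx Hm; lia.
  by split => //; move/peqP/(_ j); rewrite HZ2 eqxx; lia.
have HDe : forall k, P D k = P u k + (k == i) + (k == j) by move=> k; rewrite -HZD HZ2 Hm.
have Hij : i != j.
  apply/eqP => Hij; subst j.
  have := HD i; rewrite !HDe eqxx (gtn_eqF (ltnSn i)) addn1 addn1 => /(_ isT).
  have := P_S u i; lia.
pose f k := P u k + (k == j).
have Hf : forall k, f k.+1 <= f k.
  move=> k; rewrite /f; case: (eqVneq k.+1 j) => Hk; last first.
    by rewrite addn0; apply: leq_trans (P_S u k) (leq_addr _ _).
  have Hkj : (k == j) = false by rewrite -Hk ltn_eqF.
  have Hji : (j == i) = false by rewrite eq_sym (negbTE Hij).
  rewrite Hkj Hk.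
  have HDj : 0 < P D j by rewrite HDe eqxx; lia.
  have HDk : 0 < P D k by apply: leq_trans HDj (P_mono _ _); rewrite -Hk.
  have := HD k HDk; rewrite Hk !HDe Hkj Hji eqxx.
  have : (k == i) <= 1 by case: (k == i).
  lia.
have HN : f (size (sval u) + j).+1 = 0.
  rewrite /f /P nth_default; last by rewrite -addnS leq_addr.
  by rewrite (gtn_eqF (m := j)) // ltnS leq_addl.
have HW := P_mkP Hf HN.
exists (mkP (size (sval u) + j).+1 Hf); split; first by move=> k; rewrite HW leq_addr.
have Hji : (j == i) = false by rewrite eq_sym (negbTE Hij).
have Hij' : (i == j) = false by rewrite (negbTE Hij).
split; first by move=> k; rewrite HW HDe /f; lia.
split; first by move/peqP/(_ j); rewrite HW /f eqxx; lia.
split; first by move/peqP/(_ j); rewrite HW /f Hm eqxx Hji; lia.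
by move/peqP/(_ i); rewrite HW /f HDe eqxx Hij'; lia.
Qed.

Section Sound.
Variable p : partition.
Hypothesis Hd : forall u m, yle u m -> u <> m -> yle m p -> m <> p ->
  exists w, yle u w /\ yle w p /\ w <> u /\ w <> m /\ w <> p.

Lemma horiz k : P p k <= P p k.+1 + 1.
Proof.
rewrite leqNgt; apply/negP => Hk.
pose fu l := if l == k then P p l - 2 else P p l.
pose fm l := if l == k then P p l - 1 else P p l.
have Hu : forall l, fu l.+1 <= fu l.
  move=> l; rewrite /fu; have := P_S p l; have := P_S p l.+1.
  case: eqP => E1; case: eqP => E2; subst; lia.
have Hm : forall l, fm l.+1 <= fm l.
  move=> l; rewrite /fm; have := P_S p l; have := P_S p l.+1.
  case: eqP => E1; case: eqP => E2; subst; lia.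
have Hz : P p (size (sval p)) = 0 by rewrite /P nth_default.
have HuN : fu (size (sval p)) = 0 by rewrite /fu Hz; case: ifP.
have HmN : fm (size (sval p)) = 0 by rewrite /fm Hz; case: ifP.
have Pu := P_mkP Hu HuN; have Pm := P_mkP Hm HmN.
set u := mkP _ Hu in Pu; set m := mkP _ Hm in Pm.
have [w [/yleP H1 [/yleP H2 [H3 [H4 H5]]]]] : exists w, yle u w /\ yle w p /\ w <> u /\ w <> m /\ w <> p.
  apply: Hd.
  - apply/yleP => l; rewrite Pu Pm /fu /fm; case: ifP => _; lia.
  - move/peqP/(_ k); rewrite Pu Pm /fu /fm eqxx; lia.
  - apply/yleP => l; rewrite Pm /fm; case: ifP => _; lia.
  - move/peqP/(_ k); rewrite Pm /fm eqxx; lia.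
have Hl : forall l, l != k -> P w l = P p l.
  move=> l Hl; have := H1 l; have := H2 l; rewrite Pu /fu (negbTE Hl); lia.
have := H1 k; have := H2 k; rewrite Pu /fu eqxx => Ha Hb.
have Hc : P w k = P p k \/ P w k = P p k - 1 \/ P w k = P p k - 2 by lia.
have Hgen : forall q : partition, (forall l, l != k -> P q l = P p l) -> P q k = P w k -> w = q.
  move=> q Hq Hqk; apply/peqP => l; case: (eqVneq l k) => [->|Hlk] //.
  by rewrite Hl // Hq.
case: Hc => [E|[E|E]].
- by apply: H5; apply: Hgen.
- apply: H4; apply: Hgen; first by move=> l Hlk; rewrite Pm /fm (negbTE Hlk).
  by rewrite Pm /fm eqxx.
- apply: H3; apply: Hgen; first by move=> l Hlk; rewrite Pu /fu (negbTE Hlk).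
  by rewrite Pu /fu eqxx.
Qed.

Ltac fin := repeat match goal with H : ?a.+1 = ?b.+1 |- _ => case: H => H end; subst; lia.

Lemma vert_base k : 0 < P p k.+1 -> P p k.+2 < P p k.+1 -> P p k.+1 < P p k.
Proof.
move=> Hpos Hlt; rewrite ltn_neqAle P_S andbT; apply/negP => /eqP Heq.
pose fu l := if (l == k) || (l == k.+1) then P p l - 1 else P p l.
pose fm l := if l == k.+1 then P p l - 1 else P p l.
have Hu : forall l, fu l.+1 <= fu l.
  move=> l; rewrite /fu; have := P_S p l; have := P_S p l.+1.
  by repeat (case: eqP => ? /=); fin.
have Hm : forall l, fm l.+1 <= fm l.
  move=> l; rewrite /fm; have := P_S p l; have := P_S p l.+1.
  by repeat (case: eqP => ? /=); fin.
have Hz : P p (size (sval p)) = 0 by rewrite /P nth_default.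
have HuN : fu (size (sval p)) = 0 by rewrite /fu Hz; case: ifP.
have HmN : fm (size (sval p)) = 0 by rewrite /fm Hz; case: ifP.
have Pu := P_mkP Hu HuN; have Pm := P_mkP Hm HmN.
set u := mkP _ Hu in Pu; set m := mkP _ Hm in Pm.
have [w [/yleP H1 [/yleP H2 [H3 [H4 H5]]]]] : exists w, yle u w /\ yle w p /\ w <> u /\ w <> m /\ w <> p.
  apply: Hd.
  - apply/yleP => l; rewrite Pu Pm /fu /fm; by repeat (case: eqP => ? /=); fin.
  - move/peqP/(_ k); rewrite Pu Pm /fu /fm eqxx /=; by repeat (case: eqP => ? /=); fin.
  - apply/yleP => l; rewrite Pm /fm; case: ifP => _; lia.
  - move/peqP/(_ k.+1); rewrite Pm /fm eqxx; lia.
have Hl : forall l, l <> k -> l <> k.+1 -> P w l = P p l.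
  move=> l Hl1 Hl2; have := H1 l; have := H2 l; rewrite Pu /fu.
  by repeat (case: eqP => ? /=); fin.
have := H1 k; have := H2 k; have := H1 k.+1; have := H2 k.+1; have := P_S w k.
rewrite !Pu /fu (gtn_eqF (ltnSn k)) !eqxx ?orbT ?orTb => Ha Hb Hc Hd' He.
have Hgen : forall q : partition, (forall l, l <> k -> l <> k.+1 -> P q l = P p l) ->
    P q k = P w k -> P q k.+1 = P w k.+1 -> w = q.
  move=> q Hq Hqk Hqk1; apply/peqP => l; case: (eqVneq l k) => [->|Hlk] //.
  case: (eqVneq l k.+1) => [->|Hlk1] //.
  by rewrite Hl ?Hq //; apply/eqP.
have Hc' : (P w k = P p k /\ P w k.+1 = P p k.+1) \/ (P w k = P p k /\ P w k.+1 = P p k.+1 - 1)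
   \/ (P w k = P p k - 1 /\ P w k.+1 = P p k.+1 - 1) by lia.
case: Hc' => [[E1 E2]|[[E1 E2]|[E1 E2]]].
- by apply: H5; apply: Hgen.
- apply: H4; apply: Hgen.
  + by move=> l Hl1 Hl2; rewrite Pm /fm; case: eqP.
  + by rewrite Pm /fm (ltn_eqF (ltnSn k)).
  + by rewrite Pm /fm eqxx.
- apply: H3; apply: Hgen.
  + by move=> l Hl1 Hl2; rewrite Pu /fu; do 2 case: eqP => //.
  + by rewrite Pu /fu eqxx /= E1.
  + by rewrite Pu /fu eqxx orbT.
Qed.

Lemma vert k : 0 < P p k.+1 -> P p k.+1 < P p k.
Proof.
have : forall d k, size (sval p) <= k + d -> 0 < P p k.+1 -> P p k.+1 < P p k.
  elim=> [|d IH] k0 Hs Hpos.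
    by move: Hpos; rewrite P_pos; move: Hs; rewrite addn0; lia.
  case: (ltnP (P p k0.+2) (P p k0.+1)) => H.
    exact: vert_base.
  have := IH k0.+1; rewrite addSnnS => /(_ Hs).
  have := P_S p k0.+1; lia.
by move=> /(_ (size (sval p)) k); apply; rewrite leq_addl.
Qed.

Lemma SC k : 0 < P p k -> P p k.+1 + 1 = P p k.
Proof.
move=> Hk; have := horiz k; case: (posnP (P p k.+1)) => H.
  by rewrite H; lia.
by have := vert H; lia.
Qed.
End Sound.

Lemma nth_stair n i : nth 0 (rev (iota 1 n)) i = n - i.
Proof.
case: (ltnP i n) => Hi.
  rewrite nth_rev size_iota // nth_iota; lia.
rewrite nth_default ?size_rev ?size_iota //; lia.
Qed.

Lemma p11_le y : yle p11 y <-> 0 < P y 1.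
Proof.
rewrite yleP; split; first by move=> /(_ 1).
move=> H [|[|i]] //=; [exact: leq_trans H (P_S y 0) | by rewrite /P /= nth_nil].
Qed.

Lemma row_le y q : P y 1 = 0 -> (yle y q <-> P y 0 <= P q 0).
Proof.
move=> H1; rewrite yleP; split; first by move/(_ 0).
move=> H [|i] //; have := P_mono y (ltn0Sn i); rewrite H1 leqn0 => /eqP ->; by [].
Qed.

Definition p0 : partition := exist (fun s => is_part s) [::] (erefl true).

Lemma rowf_mono a : forall i, (fun i => if i == 0 then a else 0) i.+1 <= (fun i => if i == 0 then a else 0) i.
Proof. by case. Qed.
Definition rowp a := mkP 1 (rowf_mono a).
Lemma P_rowp a i : P (rowp a) i = if i == 0 then a else 0.
Proof. by rewrite P_mkP. Qed.

Theorem proposition3p8 : Pi_definable2 2 single_fact_rel.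
Proof.
exists phi; split; first exact: phi_Pi.
move=> e; rewrite satE; set r := e 0; set p := e 1; split.
- case=> n [Hn [Hr Hp]].
  have Pr : forall i, P r i = if i == 0 then n else 0.
    by move=> i; rewrite /P Hr; case: i => [|[|i]].
  have Pp : forall i, P p i = n - i by move=> i; rewrite /P Hp nth_stair.
  move=> y u m.
  have [w Hw] : exists w, (yle u m /\ u <> m /\ yle m p /\ m <> p ->
     yle u w /\ yle w p /\ w <> u /\ w <> m /\ w <> p).
    case: (classic (yle u m /\ u <> m /\ yle m p /\ m <> p)); last by move=> HA; exists p.
    move=> [/yleP H1 [H2 [/yleP H3 H4]]].
    have HD : forall k, 0 < P p k -> P p k.+1 + 1 = P p k by move=> k; rewrite !Pp; lia.
    have [w [W1 [W2 W3]]] := dom_complete HD H1 H2 H3 H4.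
    by exists w => _; split; [apply/yleP | split; [apply/yleP|]].
  exists p0, w; split; first by rewrite p11_le Pr.
  split; first by move/yleP/(_ 0); rewrite Pr /P /=; lia.
  split => //.
  move/p11_le => Hy; have Hy1 : P y 1 = 0 by lia.
  by rewrite !(row_le _ Hy1) Pr Pp subn0.
- move=> H.
  have [z [w0 [Hr1 [Hr2 _]]]] := H r r r.
  have Hr1' : P r 1 = 0 by move: Hr1; rewrite p11_le; lia.
  have Hr0 : 0 < P r 0.
    rewrite lt0n; apply/negP => /eqP H0; apply: Hr2; apply/yleP => i.
    by have := P_mono r (leq0n i); rewrite H0 leqn0 => /eqP ->.
  have Pr : forall i, P r i = if i == 0 then P r 0 else 0.
    case=> [|i] //=; have := P_mono r (ltn0Sn i); rewrite Hr1' leqn0 => /eqP //.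
  set n := P r 0 in Hr0 Pr *.
  have Hrow : forall y, ~ yle p11 y -> (yle y p <-> yle y r).
    move=> y Hy; have [z' [w' [_ [_ [Hy' _]]]]] := H y r r; have := Hy' Hy; tauto.
  have Hrn : forall a, P (rowp a) 1 = 0 by move=> a; rewrite P_rowp.
  have Hnot : forall a, ~ yle p11 (rowp a) by move=> a; rewrite p11_le Hrn.
  have Hp0 : P p 0 = n.
    apply/eqP; rewrite eqn_leq; apply/andP; split.
      rewrite leqNgt; apply/negP => Hlt.
      have : yle (rowp n.+1) p by rewrite (row_le _ (Hrn _)) P_rowp.
      by move/(Hrow _ (Hnot _)); rewrite (row_le _ (Hrn _)) P_rowp /= -/n ltnn.
    have : yle (rowp n) r by rewrite (row_le _ (Hrn _)) P_rowp.
    by move/(Hrow _ (Hnot _)); rewrite (row_le _ (Hrn _)) P_rowp.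
  have Hd : forall u m, yle u m -> u <> m -> yle m p -> m <> p ->
      exists w, yle u w /\ yle w p /\ w <> u /\ w <> m /\ w <> p.
    move=> u m H1 H2 H3 H4; have [z' [w' [_ [_ [_ Hw]]]]] := H r u m.
    by exists w'; apply: Hw.
  have Pp : forall i, P p i = n - i.
    elim=> [|i IH]; first by rewrite Hp0 subn0.
    case: (posnP (P p i)) => Hi.
      by have := P_S p i; rewrite Hi leqn0 => /eqP ->; lia.
    by have := SC Hd Hi; lia.
  exists n; split; first exact: Hr0.
  split.
    apply: nth_eq_pos; [exact: part_all | by rewrite /= Hr0 | move=> i].
    by change (P r i = nth 0 [:: n] i); rewrite Pr; case: i => [|[|i]].
  apply: nth_eq_pos; [exact: part_all | | by move=> i; change (P p i = nth 0 (rev (iota 1 n)) i); rewrite Pp nth_stair].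
  rewrite all_rev; apply/allP => x; rewrite mem_iota; lia.
Qed.
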